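(* Let $K$ be a field of characteristic $0$, $e\ge2$, and $A=[a_{i,j}]$, $B=[b_{i,j}]\in M_e(K)$, with indices taken in $\mathbb{Z}/e\mathbb{Z}$; write $A[i,j]=a_{i,j}$. For $d\in(\mathbb{Z}/e\mathbb{Z})^\times$, \[ (B\overset{d}{\ast}A)[i,j]=(A\overset{d^{-1}}{\ast}B)[-d^{-1}i,-d^{-1}j]\quad\text{for all } i,j. \] In particular $A\overset{-1}{\ast}B=B\overset{-1}{\ast}A$.
   Context: For $A=[a_{i,j}],B=[b_{i,j}]\in M_e(K)$ (indices modulo $e$) and $d\in(\mathbb{Z}/e\mathbb{Z})\setminus\{0\}$, the $d$-composition is $A\overset{d}{\ast}B=\big[\sum_{s=0}^{e-1}\sum_{t=0}^{e-1}a_{s,t}b_{ds+i,dt+j}\big]_{0\le i,j\le e-1}$. *)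

(* Defs.v *)
From mathcomp Require Import all_boot all_order all_algebra.
Set Implicit Arguments. Unset Strict Implicit. Unset Printing Implicit Defensive.
Import GRing.Theory.
Local Open Scope ring_scope.

(* Matrices in M_e(K) with rows/columns indexed by Z/eZ.  For 1 < e the
   index type 'I_(Zp_trunc e).+2 is exactly 'Z_e (of cardinality e). *)
Notation mxZ K e := 'M[K]_((Zp_trunc e).+2).

Definition dcomp (K : fieldType) (e : nat) (d : 'Z_e) (A B : mxZ K e) : mxZ K e :=
  \matrix_(i, j) \sum_(s : 'Z_e) \sum_(t : 'Z_e) A s t * B (d * s + i) (d * t + j).

(* Main.v *)
Require Import Defs.
From mathcomp Require Import all_boot all_order all_algebra.
Import GRing.Theory.
Local Open Scope ring_scope.

Lemma aux (K : fieldType) (e : nat) (A B : mxZ K e) (d : 'Z_e) :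
  d \is a GRing.unit -> forall i j : 'Z_e,
   dcomp d B A i j = dcomp d^-1 A B (- (d^-1 * i)) (- (d^-1 * j)).
Proof.
move=> du i j; rewrite !mxE; symmetry.
have inj (k : 'Z_e) : injective (fun x : 'Z_e => d * x + k).
  by move=> x y /addIr /(mulrI du).
rewrite (reindex_inj (inj i)) /=; apply: eq_bigr => s _.
rewrite (reindex_inj (inj j)) /=; apply: eq_bigr => t _.
rewrite mulrC; congr (B _ _ * _).
  by rewrite mulrDr mulrA mulVr // mul1r addrK.
by rewrite mulrDr mulrA mulVr // mul1r addrK.
Qed.

Theorem proposition3p1 (K : fieldType) (e : nat) (charK0 : [pchar K] =i pred0)
  (he : (1 < e)%N) (A B : mxZ K e) :
  (forall d : 'Z_e, d \is a GRing.unit ->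
     forall i j : 'Z_e,
       dcomp d B A i j = dcomp d^-1 A B (- (d^-1 * i)) (- (d^-1 * j)))
  /\ dcomp (-1) A B = dcomp (-1) B A.
Proof.
split; first exact: aux.
apply/matrixP => i j.
have u : (-1 : 'Z_e) \is a GRing.unit by rewrite unitrN1.
rewrite (@aux _ _ A B _ u) invrN1 !mulN1r !opprK //.
Qed.
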